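(* Let $K$ be a finite simplicial complex with stratification $\mathcal S$ and assignment map $s$, let $(f,s)$ be a discrete stratified Morse function on $K$, and let $V$ be the discrete gradient vector field $V=\bigcup_i V_i$ (defined below). Extend the partial order on $\mathcal S$ (given by $S_i<S_j$ iff $S_i\subseteq\overline{S_j}$) to a linear order and write the strata as $S_1<S_2<\cdots<S_n$. Then there is a discrete Morse function $g:K\to\mathbb R$ such that (1) the gradient vector field of $g$ is exactly $V$, and (2) there are real numbers $a_1<a_2<\cdots<a_n$ with $g^{-1}(-\infty,a_i]=\bigcup_{j\le i}S_j$ (as sets of simplices) for each $1\le i\le n$.
   Context: A finite simplicial complex $K$ is regarded as a finite set of open simplices closed under taking faces; closures are taken in $|K|$. A stratification of $K$ is a finite collection $\mathcal S=\{S_i\}$ of pairwise disjoint, locally closed subsets of $|K|$, each a union of open simplices, covering $|K|$, with $S_i\cap\overline{S_j}\neq\emptyset$ iff $S_i\subseteq\overline{S_j}$; $s:K\to\mathcal S$ sends a simplex to the stratum containing it. For $f:K\to\mathbb R$ and a $p$-simplex $\alpha$: $U(\alpha)=\{\beta^{(p+1)}>\alpha: f(\beta)\le f(\alpha)\}$, $L(\alpha)=\{\gamma^{(p-1)}<\alpha: f(\gamma)\ge f(\alpha)\}$, and $U_s,L_s$ are the subsets consisting of simplices in the same stratum as $\alpha$. $f$ is a discrete Morse function if $|U(\alpha)|\le1,|L(\alpha)|\le1$ for all $\alpha$; $(f,s)$ is a discrete stratified Morse function if $|U_s(\alpha)|\le1$, $|L_s(\alpha)|\le1$ and not both are nonempty,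 for all $\alpha$. $V_i$ is the set of pairs $\{\alpha^{(p)}<\beta^{(p+1)}\}$ with $\alpha,\beta\subseteq S_i$ and $f(\beta)\le f(\alpha)$, and $V=\bigcup_iV_i$. The gradient vector field of a discrete Morse function $g$ is the set of pairs $\{\alpha^{(p)}<\beta^{(p+1)}\}$ with $g(\beta)\le g(\alpha)$. *)

(* Defs.v *)
From mathcomp Require Import all_boot.
From Stdlib Require Import Reals.

Set Implicit Arguments.
Unset Strict Implicit.
Unset Printing Implicit Defensive.

Section Defs.
Variable V : finType.

(* A finite (abstract) simplicial complex on the vertex set V: a finite set of
   nonempty simplices closed under taking nonempty faces.  A p-simplex is a
   simplex with p+1 vertices. *)
Definition simplicial_complex (K : {set {set V}}) : Prop :=
  (forall sigma, sigma \in K -> sigma != set0) /\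
  (forall sigma tau : {set V}, sigma \in K -> tau \subset sigma -> tau != set0 -> tau \in K).

Definition facet (alpha beta : {set V}) : bool :=
  (alpha \subset beta) && (#|beta| == #|alpha|.+1).

Definition in_stratum n (K : {set {set V}}) (s : {set V} -> 'I_n) (i : 'I_n)
  (sigma : {set V}) : Prop := sigma \in K /\ s sigma = i.

(* Closure in |K| of the stratum S_j (a union of open simplices): the set of
   all faces of simplices of S_j. *)
Definition in_closure n (K : {set {set V}}) (s : {set V} -> 'I_n) (j : 'I_n)
  (tau : {set V}) : Prop :=
  tau \in K /\ exists sigma, in_stratum K s j sigma /\ tau \subset sigma.

(* s : K -> 'I_n describes a stratification {S_0,...,S_{n-1}} of K
   (S_i = s^{-1}(i)): the strata are pairwise disjoint and cover K by
   construction; each S_i is locally closed (combinatorially: convex in the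
   face poset); and the frontier condition holds:
   S_i ∩ cl(S_j) ≠ ∅  <->  S_i ⊆ cl(S_j).  (With i = j the frontier condition
   forces every stratum to be nonempty.) *)
Definition stratification n (K : {set {set V}}) (s : {set V} -> 'I_n) : Prop :=
  (forall (i : 'I_n) (alpha beta gamma : {set V}),
      in_stratum K s i alpha -> in_stratum K s i gamma -> beta \in K ->
      alpha \subset beta -> beta \subset gamma -> in_stratum K s i beta) /\
  (forall i j : 'I_n,
      (exists sigma, in_stratum K s i sigma /\ in_closure K s j sigma) <->
      (forall sigma, in_stratum K s i sigma -> in_closure K s j sigma)).

(* The indexing 'I_n of the strata is a linear extension of the partial order
   S_i < S_j iff S_i ⊆ cl(S_j) (i ≠ j). *)
Definition linear_extension n (K : {set {set V}}) (s : {set V} -> 'I_n) : Prop :=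
  forall i j : 'I_n, i != j ->
    (forall sigma, in_stratum K s i sigma -> in_closure K s j sigma) ->
    (i < j)%N.

Definition inU (K : {set {set V}}) (f : {set V} -> R) (alpha beta : {set V}) : Prop :=
  beta \in K /\ facet alpha beta /\ Rle (f beta) (f alpha).
Definition inL (K : {set {set V}}) (f : {set V} -> R) (alpha gamma : {set V}) : Prop :=
  gamma \in K /\ facet gamma alpha /\ Rge (f gamma) (f alpha).

Definition at_most_one (P : {set V} -> Prop) : Prop :=
  forall x y, P x -> P y -> x = y.

Definition discrete_Morse (K : {set {set V}}) (f : {set V} -> R) : Prop :=
  forall alpha, alpha \in K ->
    at_most_one (inU K f alpha) /\ at_most_one (inL K f alpha).

Definition discrete_stratified_Morse n (K : {set {set V}}) (f : {set V} -> R)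
  (s : {set V} -> 'I_n) : Prop :=
  forall alpha, alpha \in K ->
    let Us := fun beta => inU K f alpha beta /\ s beta = s alpha in
    let Ls := fun gamma => inL K f alpha gamma /\ s gamma = s alpha in
    at_most_one Us /\ at_most_one Ls /\
    ~ ((exists beta, Us beta) /\ (exists gamma, Ls gamma)).

Definition strat_gradient n (K : {set {set V}}) (f : {set V} -> R)
  (s : {set V} -> 'I_n) (alpha beta : {set V}) : Prop :=
  alpha \in K /\ beta \in K /\ facet alpha beta /\ s alpha = s beta /\
  Rle (f beta) (f alpha).

Definition gradient (K : {set {set V}}) (g : {set V} -> R)
  (alpha beta : {set V}) : Prop :=
  alpha \in K /\ beta \in K /\ facet alpha beta /\ Rle (g beta) (g alpha).

End Defs.

(* Main.v *)
Require Import Defs.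
From mathcomp Require Import all_boot.
From Stdlib Require Import Reals Lra.

Set Implicit Arguments.
Unset Strict Implicit.

Definition bnd (V : finType) (f : {set V} -> R) (l : seq {set V}) : R :=
  foldr (fun x acc => (Rabs (f x) + acc)%R) 0%R l.

Lemma bnd_ge0 (V : finType) (f : {set V} -> R) l : (0 <= bnd f l)%R.
Proof.
elim: l => [|x l IH] /=; first lra.
have := Rabs_pos (f x); lra.
Qed.

Lemma bnd_in (V : finType) (f : {set V} -> R) l x : x \in l -> (Rabs (f x) <= bnd f l)%R.
Proof.
elim: l => [|y l IH] //=; rewrite inE => /orP [/eqP -> | H].
- have := bnd_ge0 f l; lra.
- have := IH H; have := Rabs_pos (f y); lra.
Qed.

Lemma face_le (V : finType) (K : {set {set V}}) (n : nat) (s : {set V} -> 'I_n) alpha beta :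
  stratification K s -> linear_extension K s ->
  alpha \in K -> beta \in K -> alpha \subset beta -> (s alpha <= s beta)%N.
Proof.
move=> [_ Hfr] Hlin aK bK sub.
case: (eqVneq (s alpha) (s beta)) => [-> //|ne].
apply: ltnW; apply: (Hlin _ _ ne).
apply (proj1 (Hfr (s alpha) (s beta))).
exists alpha; split; first by split.
split=> //; exists beta; split=> //; by split.
Qed.

Theorem mainTheorem5 (V : finType) (K : {set {set V}}) (n : nat)
    (s : {set V} -> 'I_n) (f : {set V} -> R) :
  simplicial_complex K ->
  stratification K s ->
  linear_extension K s ->
  discrete_stratified_Morse K f s ->
  exists g : {set V} -> R,
    discrete_Morse K g /\
    (forall alpha beta, gradient K g alpha beta <-> strat_gradient K f s alpha beta) /\
    exists a : 'I_n -> R,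
      (forall i j : 'I_n, (i < j)%N -> Rlt (a i) (a j)) /\
      (forall (i : 'I_n) sigma, sigma \in K ->
         (Rle (g sigma) (a i) <-> (s sigma <= i)%N)).
Proof.
move=> _ Hst Hlin HM.
set M := bnd f (enum K).
have M0 : (0 <= M)%R by apply: bnd_ge0.
set C := (2 * M + 1)%R.
have C0 : (0 < C)%R by rewrite /C; lra.
have hf : forall x, x \in K -> (- M <= f x <= M)%R.
  move=> x xK; have := bnd_in f (l:=enum K) (x:=x); rewrite mem_enum => /(_ xK) H.
  rewrite -/M in H; have := Rle_abs (f x); have := Rabs_Ropp (f x); have := Rle_abs (- f x); lra.
set g := fun x => (f x + C * INR (s x))%R.
set a := fun i : nat => (M + C * INR i)%R.
have gle : forall x (i : nat), x \in K -> (s x <= i)%N -> (g x <= a i)%R.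
  move=> x i xK /leP H; have := le_INR _ _ H => H2.
  have := Rmult_le_compat_l C _ _ (Rlt_le _ _ C0) H2.
  have := hf x xK; rewrite /g /a; lra.
have glt : forall x (i : nat), x \in K -> (i < s x)%N -> (a i < g x)%R.
  move=> x i xK /leP H; have := le_INR _ _ H; rewrite S_INR => H2.
  have := Rmult_le_compat_l C _ _ (Rlt_le _ _ C0) H2.
  have := hf x xK; rewrite /g /a /C; lra.
have grad : forall alpha beta, gradient K g alpha beta <-> strat_gradient K f s alpha beta.
  move=> al be; split.
  - move=> [aK [bK [fc Hle]]].
    have sub : al \subset be by case/andP: fc.
    have Hle2 := face_le Hst Hlin aK bK sub.
    have eqs : s al = s be.
      apply/val_inj/eqP; rewrite eqn_leq Hle2 /= leqNgt; apply/negP => Hlt.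
      have := gle al (s al) aK (leqnn _); have := glt be (s al) bK Hlt; lra.
    do 4 (split=> //).
    move: Hle; rewrite /g eqs; lra.
  - move=> [aK [bK [fc [eqs Hle]]]]; do 3 (split=> //).
    rewrite /g eqs; lra.
exists g; split; [|split=> //].
  move=> al aK; have [HU [HL _]] := HM al aK; split.
  - move=> x y [xK [fx gx]] [yK [fy gy]].
    have [_ [_ [_ [ex lx]]]] := proj1 (grad al x) (conj aK (conj xK (conj fx gx))).
    have [_ [_ [_ [ey ly]]]] := proj1 (grad al y) (conj aK (conj yK (conj fy gy))).
    apply: HU; split=> //; split=> //; split=> //.
  - move=> x y [xK [fx gx]] [yK [fy gy]].
    have [_ [_ [_ [ex lx]]]] := proj1 (grad x al) (conj xK (conj aK (conj fx (Rge_le _ _ gx)))).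
    have [_ [_ [_ [ey ly]]]] := proj1 (grad y al) (conj yK (conj aK (conj fy (Rge_le _ _ gy)))).
    apply: HL; split; try split; try split; try (by []); try (by apply: Rle_ge).
exists (fun i : 'I_n => a i); split.
  move=> i j /leP H; have := le_INR _ _ H; rewrite S_INR => H2.
  have := Rmult_le_compat_l C _ _ (Rlt_le _ _ C0) H2; rewrite /a; lra.
move=> i x xK; split.
- move=> H; rewrite leqNgt; apply/negP => Hlt; have := glt x i xK Hlt; lra.
- by move=> H; apply: gle.
Qed.
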